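(* Let $m$ range over even integers tending to infinity, with $N=N(m)$, $n=n(m)$ positive integers satisfying $N=o(m)$ and $n=o(m)$, and fix $0<\varepsilon\le1$. Then, uniformly over $\omega\in K_m$, $$\log\Pr_{(u,q^\omega,u)}(A)=-\Big(1+\tfrac12\varepsilon^2\Big)\frac{N^2}{m}\,(1+o(1))+O(1),$$ where $A$ is the event that no symbol appears more than once in $X$ and no symbol appears more than once in $Y$.
   Context: Let $u$ be the uniform distribution on $[m]=\{1,\dots,m\}$. Let $K_m$ be the collection of all subsets of $[m]$ of cardinality $m/2$. For $\omega\in K_m$ let $q^\omega$ be the distribution on $[m]$ with $q^\omega_j=(1+\varepsilon)/m$ for $j\in\omega$ and $q^\omega_j=(1-\varepsilon)/m$ for $j\notin\omega$. $\Pr_{(u,q^\omega,u)}$ denotes the probability when $X=(X_1,\dots,X_N)$ is i.i.d. uniform on $[m]$, $Y=(Y_1,\dots,Y_N)$ is i.i.d. with marginal $q^\omega$, $Z=(Z_1,\dots,Z_n)$ is i.i.d. uniform on $[m]$, and $X,Y,Z$ are independent. *)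

(* Defs.v *)
From HB Require Import structures.
From mathcomp Require Import all_boot all_order all_algebra.
From mathcomp Require Import reals exp.
Set Implicit Arguments. Unset Strict Implicit. Unset Printing Implicit Defensive.
Import Order.TTheory GRing.Theory Num.Theory.
Local Open Scope ring_scope.

Section Defs.
Variable R : realType.

Definition unifp (m : nat) (j : 'I_m) : R := 1 / m%:R.

Definition qom (eps : R) (m : nat) (omega : {set 'I_m}) (j : 'I_m) : R :=
  if j \in omega then (1 + eps) / m%:R else (1 - eps) / m%:R.

Definition eventA (N m : nat) (x y : {ffun 'I_N -> 'I_m}) : bool :=
  injectiveb x && injectiveb y.

(* Pr_{(u,q^omega,u)}(A): X ~ u^N, Y ~ (q^omega)^N, Z ~ u^n, independent *)
Definition probA (eps : R) (m : nat) (omega : {set 'I_m}) (N n : nat) : R :=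
  \sum_(w : {ffun 'I_N -> 'I_m} * {ffun 'I_N -> 'I_m} * {ffun 'I_n -> 'I_m}
         | eventA w.1.1 w.1.2)
    ((\prod_(i < N) unifp (w.1.1 i)) * (\prod_(i < N) qom eps omega (w.1.2 i))
      * (\prod_(k < n) unifp (w.2 k))).
End Defs.

(* Main.v *)
Require Import Defs.
From HB Require Import structures.
From mathcomp Require Import all_boot all_order all_algebra.
From mathcomp Require Import reals exp.
From mathcomp Require Import ring lra sequences.
From mathcomp Require Import zify.
Import Order.TTheory GRing.Theory Num.Theory.
Local Open Scope ring_scope.
Set Implicit Arguments. Unset Strict Implicit. Unset Printing Implicit Defensive.

Section Comb.
Variable R : realType.

Definition W (m N : nat) (q : 'I_m -> R) : R :=
  \sum_(y : {ffun 'I_N -> 'I_m} | injectiveb y) \prod_(i < N) q (y i).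

Lemma W_ext m N (q1 q2 : 'I_m -> R) : q1 =1 q2 -> W N q1 = W N q2.
Proof. by move=> e; apply: eq_bigr => y _; apply: eq_bigr => i _; rewrite e. Qed.

Lemma probA_fact (eps : R) m (omega : {set 'I_m}) N n : (0 < m)%N ->
  probA eps omega N n = W N (@unifp R m) * W N (qom eps omega).
Proof.
move=> m0; rewrite /probA.
have -> : \sum_(w : {ffun 'I_N -> 'I_m} * {ffun 'I_N -> 'I_m} * {ffun 'I_n -> 'I_m}
         | eventA w.1.1 w.1.2)
    ((\prod_(i < N) unifp R (w.1.1 i)) * (\prod_(i < N) qom eps omega (w.1.2 i))
      * (\prod_(k < n) unifp R (w.2 k))) =
  \sum_(w : {ffun 'I_N -> 'I_m} * {ffun 'I_N -> 'I_m} | eventA w.1 w.2)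
   \sum_(z : {ffun 'I_n -> 'I_m} | true)
    ((\prod_(i < N) unifp R (w.1 i)) * (\prod_(i < N) qom eps omega (w.2 i))
      * (\prod_(k < n) unifp R (z k))).
  by rewrite pair_big /=; apply: eq_bigl => -[[x y] z]; rewrite andbT.
have h1 : \sum_(z : {ffun 'I_n -> 'I_m}) \prod_(k < n) (unifp R (z k) : R) = 1.
  rewrite -(bigA_distr_bigA (fun (k : 'I_n) (j : 'I_m) => (unifp R j))) /=.
  apply: big1 => k _; rewrite /unifp sumr_const card_ord.
  rewrite -mulr_natl; field; by rewrite pnatr_eq0 -lt0n.
under eq_bigr do rewrite -mulr_sumr h1 mulr1.
rewrite /W big_distrl /=; symmetry; under eq_bigr => x _ do rewrite mulr_sumr.
by rewrite pair_big /=.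
Qed.

Definition zq m (q : 'I_m -> R) (j : 'I_m) : 'I_m -> R :=
  fun i => if i == j then 0 else q i.

Definition gl m N (p : 'I_m * {ffun 'I_N -> 'I_m}) : {ffun 'I_N.+1 -> 'I_m} :=
  [ffun i => if unlift ord0 i is Some k then p.2 k else p.1].
Definition hl m N (F : {ffun 'I_N.+1 -> 'I_m}) : 'I_m * {ffun 'I_N -> 'I_m} :=
  (F ord0, [ffun k => F (lift ord0 k)]).

Lemma gl0 m N j (f : {ffun 'I_N -> 'I_m}) : gl (j, f) ord0 = j.
Proof. by rewrite ffunE unlift_none. Qed.
Lemma glS m N j (f : {ffun 'I_N -> 'I_m}) i : gl (j, f) (lift ord0 i) = f i.
Proof. by rewrite ffunE liftK. Qed.

Lemma injb_codom (A B : finType) (f : A -> B) : injectiveb f = uniq (codom f).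
Proof. by []. Qed.

Lemma codom_gl m N j (f : {ffun 'I_N -> 'I_m}) : codom (gl (j, f)) = j :: codom f.
Proof.
rewrite /codom /image_mem enum_ordSl /= gl0 -map_comp.
by congr (_ :: _); apply: eq_map => i /=; rewrite glS.
Qed.

Lemma inj_gl m N j (f : {ffun 'I_N -> 'I_m}) :
  injectiveb (gl (j, f)) = (j \notin codom f) && injectiveb f.
Proof. by rewrite !injb_codom codom_gl. Qed.

Lemma W_rec m N (q : 'I_m -> R) : W N.+1 q = \sum_j q j * W N (zq q j).
Proof.
rewrite /W (reindex (@gl m N)) /=; last first.
  apply: onW_bij; exists (@hl m N).
    move=> [j f]; rewrite /hl gl0; congr (_, _); apply/ffunP => i.
    by rewrite ffunE glS.
  move=> F; apply/ffunP => i; rewrite ffunE /=.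
  case: (unliftP ord0 i) => [k ->|->] /=; rewrite ?ffunE //.
rewrite big_mkcond /=.
under [RHS]eq_bigr do rewrite mulr_sumr big_mkcond /=.
rewrite pair_big /=; apply: eq_bigr => -[j f] _ /=.
rewrite inj_gl big_ord_recl gl0.
have -> : \prod_(i<N) q (gl (j,f) (lift ord0 i)) = \prod_(i<N) q (f i).
  by apply: eq_bigr => i _; rewrite glS.
case: (boolP (j \in codom f)) => /= jf; last first.
  case: (injectiveb f); rewrite ?mulr0 //; congr (_ * _); apply: eq_bigr => i _.
  rewrite /zq; case: eqP => [e|//]; case/negP: jf; rewrite -e; exact: codom_f.
case: (injectiveb f) => //.
move/codomP: jf => [i ->]; rewrite (bigD1 i) //= /zq eqxx mul0r mulr0 //.
Qed.

Fixpoint G (a b : R) (N s t : nat) : R :=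
  match N with
  | 0 => 1
  | N'.+1 => s%:R * a * G a b N' s.-1 t + t%:R * b * G a b N' s t.-1
  end.

Lemma W0 m (q : 'I_m -> R) : W 0 q = 1.
Proof.
rewrite /W (eq_bigl predT); last by move=> y; apply/injectiveP => -[].
rewrite (eq_bigr (fun _ => 1)); last by move=> y _; rewrite big_ord0.
rewrite sumr_const card_ffun.
by have -> : #|fintype_ordinal__canonical__fintype_Finite 0| = 0%N by apply: eq_card0 => -[].
Qed.

Lemma W_G m (a b : R) N : forall (S T : {set 'I_m}) (q : 'I_m -> R),
  (forall j, j \in S -> j \notin T) ->
  (forall j, q j = if j \in S then a else if j \in T then b else 0) ->
  W N q = G a b N #|S| #|T|.
Proof.
elim: N => [|N IH] S T q dST qE; first by rewrite W0.
rewrite W_rec /=.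
have step : forall j, q j * W N (zq q j) =
   (if j \in S then a * G a b N #|S|.-1 #|T| else 0) +
   (if j \in T then b * G a b N #|S| #|T|.-1 else 0).
  move=> j; case: (boolP (j \in S)) => jS.
    rewrite (negbTE (dST _ jS)) addr0 qE jS.
    have d1 : forall i, i \in S :\ j -> i \notin T.
      by move=> i; rewrite in_setD1 => /andP[_ /dST].
    have f1 : forall i, zq q j i = if i \in S :\ j then a else if i \in T then b else 0.
      move=> i; rewrite /zq qE in_setD1; case: (i =P j) => [->|_] //=.
      by rewrite (negbTE (dST _ jS)).
    by rewrite (IH (S :\ j) T _ d1 f1) (cardsD1 j S) jS.
  rewrite add0r; case: (boolP (j \in T)) => jT.
    have d1 : forall i, i \in S -> i \notin T :\ j.
      by move=> i iS; rewrite in_setD1 negb_and (dST _ iS) orbT.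
    have f1 : forall i, zq q j i = if i \in S then a else if i \in T :\ j then b else 0.
      move=> i; rewrite /zq qE in_setD1; case: (i =P j) => [->|_] //=.
      by rewrite (negbTE jS) ?eqxx.
    by rewrite qE (negbTE jS) jT (IH S (T :\ j) _ d1 f1) (cardsD1 j T) jT.
  by rewrite qE (negbTE jS) (negbTE jT) mul0r.
rewrite (eq_bigr _ (fun j _ => step j)) big_split /=.
rewrite -[X in X + _ = _]big_mkcond -[X in _ + X = _]big_mkcond /=.
by rewrite !sumr_const -!mulrA !mulr_natl.
Qed.

Lemma pascal_sum (A B : nat -> R) N :
  \sum_(k < N.+2) A k * B (N.+1 - k)%N *+ 'C(N.+1, k) =
  \sum_(k < N.+1) A k.+1 * B (N - k)%N *+ 'C(N, k) +
  \sum_(k < N.+1) A k * B (N.+1 - k)%N *+ 'C(N, k).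
Proof.
rewrite big_ord_recl [X in _ = _ + X]big_ord_recl /=.
under eq_bigr do rewrite /bump leq0n add1n binS mulrnDr subSS.
rewrite big_split /= [X in _ + X = _]addrC [LHS]addrCA; congr (_ + _); congr (_ + _).
  by rewrite !bin0.
rewrite big_ord_recr /= bin_small // mulr0n addr0.
by apply: eq_bigr => i _; rewrite /bump leq0n add1n.
Qed.

Lemma G_closed a b N : forall s t, G a b N s t =
  \sum_(k < N.+1) (a ^+ k * (s ^_ k)%:R) * (b ^+ (N - k) * (t ^_ (N - k))%:R) *+ 'C(N, k).
Proof.
elim: N => [|N IH] s t.
  by rewrite big_ord1 /= !expr0 !ffactn0 !mul1r mulr1n.
have ha : forall k, s%:R * a * (a ^+ k * (s.-1 ^_ k)%:R) = a ^+ k.+1 * (s ^_ k.+1)%:R.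
  move=> k; case: s => [|s] /=; first by rewrite mul0r mul0r ffact0n mulr0.
  by rewrite ffactSS natrM exprS; ring.
have hb : forall l, t%:R * b * (b ^+ l * (t.-1 ^_ l)%:R) = b ^+ l.+1 * (t ^_ l.+1)%:R.
  move=> k; case: t => [|t] /=; first by rewrite mul0r mul0r ffact0n mulr0.
  by rewrite ffactSS natrM exprS; ring.
rewrite /= !IH !mulr_sumr (pascal_sum (fun k => a ^+ k * (s ^_ k)%:R)
   (fun l => b ^+ l * (t ^_ l)%:R)).
congr (_ + _); apply: eq_bigr => k _.
  by rewrite mulrnAr mulrA ha.
rewrite mulrnAr; congr (_ *+ _).
have kN : (k <= N)%N by rewrite -ltnS.
by rewrite subSn // -hb; ring.
Qed.

Definition Ff (h k : nat) : R := (h ^_ k)%:R / h%:R ^+ k.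

Lemma Ff_ge0 h k : 0 <= Ff h k.
Proof. by rewrite /Ff divr_ge0 // exprn_ge0. Qed.

Lemma FfS h k : (0 < h)%N -> Ff h k.+1 = Ff h k * ((h - k)%N%:R / h%:R).
Proof.
move=> h0; rewrite /Ff ffactnSr natrM exprSr.
have hr : (h%:R : R) != 0 by rewrite pnatr_eq0 -lt0n.
have : (h%:R ^+ k : R) != 0 by rewrite expf_neq0.
by move=> hk; field; rewrite hk hr.
Qed.

Lemma Ff_up h k : (0 < h)%N ->
  Ff h k <= expR (- (k%:R * (k%:R - 1)) / (2 * h%:R)).
Proof.
move=> h0; have hp : (0 : R) < h%:R by rewrite ltr0n.
elim: k => [|k IH]; first by rewrite /Ff expr0 ffactn0 divr1 mul0r oppr0 mul0r expR0.
rewrite FfS //.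
case: (leqP k h) => kh; last first.
  by rewrite (eqP (ltnW kh : (h <= k)%N)) ?subn_eq0 // mul0r mulr0 expR_ge0 //; rewrite subn_eq0 ltnW.
have -> : - ((k.+1)%:R * ((k.+1)%:R - 1)) / (2 * h%:R) =
   - (k%:R * (k%:R - 1)) / (2 * h%:R) + (- (k%:R / h%:R)) :> R.
  by rewrite -natr1; field; rewrite pnatr_eq0 -lt0n.
rewrite expRD ler_pM ?Ff_ge0 //; first by rewrite divr_ge0.
rewrite natrB // mulrBl divff ?pnatr_eq0 -?lt0n //.
exact: expR_ge1Dx.
Qed.

Lemma lower_factor (x : R) : 0 <= x -> x <= 1/2 -> expR (-(x + 2 * x ^+ 2)) <= 1 - x.
Proof.
move=> x0 x1; rewrite expRN -div1r ler_pdivrMr ?expR_gt0 //.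
apply: (le_trans _ (ler_wpM2l _ (expR_ge1Dx _))); last by lra.
nra.
Qed.

Lemma Ff_low h k : (k.*2 <= h)%N ->
  expR (- (k%:R ^+ 2 / (2 * h%:R) + k%:R ^+ 3 / h%:R ^+ 2)) <= Ff h k.
Proof.
elim: k => [|k IH] hk.
  by rewrite /Ff expr0 ffactn0 divr1 expr0n /= mul0r add0r expr0n mul0r oppr0 expR0.
have h0 : (0 < h)%N by lia.
have hp : (0 : R) < h%:R by rewrite ltr0n.
have kh : (k <= h)%N by lia.
rewrite FfS // natrB // mulrBl divff ?gt_eqF //.
have x0 : (0 : R) <= k%:R / h%:R by rewrite divr_ge0 // ltW.
have x1 : k%:R / h%:R <= 1/2 :> R.
  rewrite ler_pdivrMr //.
  have : ((2 * k)%N%:R : R) <= h%:R by rewrite ler_nat; lia.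
  rewrite natrM; lra.
have IH' := IH (ltac:(lia)).
apply: le_trans (ler_pM (expR_ge0 _) (expR_ge0 _) IH' (lower_factor x0 x1)).
rewrite -expRD ler_expR -natr1.
set K := k%:R; set H := h%:R.
have K0 : 0 <= K by rewrite /K ler0n.
rewrite -subr_ge0.
have -> : - (K ^+ 2 / (2 * H) + K ^+ 3 / H ^+ 2) - (K / H + 2 * (K / H) ^+ 2) -
  - ((K + 1) ^+ 2 / (2 * H) + (K + 1) ^+ 3 / H ^+ 2) = (1/2) / H + (K^+2 + 3 * K + 1) / H ^+ 2.
  by field; rewrite gt_eqF.

by rewrite addr_ge0 // divr_ge0 // ?exprn_ge0 ?ltW //; nra.
Qed.

End Comb.

Section B.
Variable R : realType.
Lemma mom_step (x y : R) N (f : nat -> R) :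
  \sum_(k < N.+2) x ^+ (N.+1 - k) * y ^+ k *+ 'C(N.+1, k) * (k%:R * f k.-1) =
  N.+1%:R * y * \sum_(k < N.+1) x ^+ (N - k) * y ^+ k *+ 'C(N, k) * f k.
Proof.
rewrite big_ord_recl /= mul0r mulr0 add0r mulr_sumr.
apply: eq_bigr => i _; rewrite /bump leq0n add1n subSS /=.
have e : ('C(N.+1, i.+1) * i.+1 = N.+1 * 'C(N, i))%N by rewrite mulnC -mul_bin_diag.
rewrite -(mulr_natr _ 'C(N.+1, i.+1)) -(mulr_natr _ 'C(N, i)).
have e' : ('C(N.+1, i.+1)%:R * (i.+1)%:R = (N.+1)%:R * 'C(N, i)%:R :> R) by rewrite -!natrM e.
rewrite exprS.
transitivity (x ^+ (N - i) * (y * y ^+ i) * ('C(N.+1, i.+1)%:R * (i.+1)%:R) * f i); first by ring.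
rewrite e'; ring.
Qed.

Lemma binom_gen (x y r : R) N :
  \sum_(k < N.+1) x ^+ (N - k) * y ^+ k *+ 'C(N, k) * r ^+ k = (x + y * r) ^+ N.
Proof.
rewrite exprDn; apply: eq_bigr => k _.
by rewrite -(mulr_natr _ 'C(N, k)) -(mulr_natr _ 'C(N, k)) exprMn; ring.
Qed.

Lemma binom_mom1 (x y : R) N :
  \sum_(k < N.+1) x ^+ (N - k) * y ^+ k *+ 'C(N, k) * k%:R = N%:R * y * (x + y) ^+ N.-1.
Proof.
case: N => [|N]; first by rewrite big_ord1 mulr0 mul0r mul0r.
transitivity (\sum_(k < N.+2) x ^+ (N.+1 - k) * y ^+ k *+ 'C(N.+1, k) * (k%:R * 1)).
  by apply: eq_bigr => k _; rewrite mulr1.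
rewrite (mom_step x y N (fun _ => 1)) /=; congr (_ * _).
rewrite -[in RHS](mulr1 y) -(binom_gen x y 1 N).
by apply: eq_bigr => k _; rewrite expr1n.
Qed.

Lemma binom_mom2 (x y : R) N :
  \sum_(k < N.+1) x ^+ (N - k) * y ^+ k *+ 'C(N, k) * (k%:R * (k.-1)%:R) =
  N%:R * (N.-1)%:R * y ^+ 2 * (x + y) ^+ N.-2.
Proof.
case: N => [|N]; first by rewrite big_ord1 !mul0r mulr0.
rewrite (mom_step x y N (fun j => j%:R)) binom_mom1 /=.
by rewrite expr2; ring.
Qed.

Lemma jensen_exp (I : finType) (w phi : I -> R) :
  (forall i, 0 <= w i) -> \sum_i w i = 1 ->
  expR (- \sum_i w i * phi i) <= \sum_i w i * expR (- phi i).
Proof.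
move=> w0 w1; set mu := \sum_i w i * phi i.
have key : forall i, w i * (expR (- mu) * (1 - phi i + mu)) <= w i * expR (- phi i).
  move=> i; apply: ler_wpM2l => //.
  have -> : expR (- phi i) = expR (- mu) * expR (mu - phi i) by rewrite -expRD; congr expR; ring.
  apply: ler_wpM2l; first exact: expR_ge0.
  by apply: le_trans (expR_ge1Dx _); rewrite addrA [1 - _ + _]addrC addrA; lra.
apply: le_trans (ler_sum _ (fun i _ => key i)).
have -> : \sum_i w i * (expR (- mu) * (1 - phi i + mu)) =
   expR (- mu) * ((1 + mu) * \sum_i w i - \sum_i w i * phi i).
  rewrite [X in _ * (X - _)]mulr_sumr -sumrB mulr_sumr; apply: eq_bigr => i _; ring.
by rewrite w1 mulr1 -/mu addrK mulr1.
Qed.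

Lemma G_mix (e : R) h N : (0 < h)%N ->
  G ((1 + e) / (2 * h%:R)) ((1 - e) / (2 * h%:R)) N h h =
  \sum_(k < N.+1) (1 - (1 + e) / 2) ^+ (N - k) * ((1 + e) / 2) ^+ k *+ 'C(N, k)
     * (Ff R h k * Ff R h (N - k)).
Proof.
move=> h0; have hr : (h%:R : R) != 0 by rewrite pnatr_eq0 -lt0n.
rewrite G_closed; apply: eq_bigr => k _.
rewrite -[in LHS](mulr_natr _ 'C(N, k)) -[in RHS](mulr_natr _ 'C(N, k)) /Ff.
have -> : (1 + e) / (2 * h%:R) = (1 + e) / 2 / h%:R by field; rewrite hr.
have -> : (1 - e) / (2 * h%:R) = (1 - (1 + e) / 2) / h%:R by field; rewrite hr.
rewrite !expr_div_n.
have h1 : (h%:R ^+ k : R) != 0 by rewrite expf_neq0.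
have h2 : (h%:R ^+ (N - k) : R) != 0 by rewrite expf_neq0.
by field; rewrite h1 h2 expf_neq0 // pnatr_eq0.
Qed.

Lemma quad_ineq (K Nn e M : R) : 0 < M ->
  - (K * (K - 1)) / M + - ((Nn - K) * ((Nn - K) - 1)) / M <=
  (Nn / M - Nn ^+ 2 / (2 * M) + e * Nn ^+ 2 / M + e ^+ 2 * Nn ^+ 2 / (2 * M))
   + (- (2 * e * Nn / M)) * K.
Proof.
move=> M0; rewrite -subr_ge0.
set c := Nn * (1 + e) / 2.
have -> : (Nn / M - Nn ^+ 2 / (2 * M) + e * Nn ^+ 2 / M + e ^+ 2 * Nn ^+ 2 / (2 * M))
   + (- (2 * e * Nn / M)) * K - (- (K * (K - 1)) / M + - ((Nn - K) * ((Nn - K) - 1)) / M)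
   = 2 * (K - c) ^+ 2 / M by rewrite /c; field; rewrite gt_eqF.
apply: divr_ge0; last exact: ltW. by apply: mulr_ge0 => //; exact: sqr_ge0.
Qed.

Lemma final_up (Nn e M : R) : 0 < M -> 0 <= Nn -> 0 <= e -> e <= 1 ->
  (Nn / M - Nn ^+ 2 / (2 * M) + e * Nn ^+ 2 / M + e ^+ 2 * Nn ^+ 2 / (2 * M))
  + (- ((1 + e) / 2 * (2 * e * Nn / M) / (1 + 2 * e * Nn / M))) * Nn
  <= Nn / M - (1 + e ^+ 2) * Nn ^+ 2 / (2 * M) + 4 * Nn ^+ 3 / M ^+ 2.
Proof.
move=> M0 N0 e0 e1.
set l := 2 * e * Nn / M.
have l0 : 0 <= l by apply: divr_ge0; [apply: mulr_ge0 => //; apply: mulr_ge0 | apply: ltW].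
have hl : (1 + e) / 2 * l - (1 + e) / 2 * l ^+ 2 <= (1 + e) / 2 * l / (1 + l).
  rewrite ler_pdivlMr; last by lra.
  have p0 : 0 <= (1 + e) / 2 by lra.
  have := mulr_ge0 p0 (exprn_ge0 3 l0).
  by rewrite !exprS expr0; nra.
apply: le_trans (_ : _ <= (Nn / M - Nn ^+ 2 / (2 * M) + e * Nn ^+ 2 / M + e ^+ 2 * Nn ^+ 2 / (2 * M))
    + (- ((1 + e) / 2 * l - (1 + e) / 2 * l ^+ 2)) * Nn) _.
  by rewrite lerD2l ler_wpM2r // lerN2.
rewrite -subr_ge0.
have -> : Nn / M - (1 + e ^+ 2) * Nn ^+ 2 / (2 * M) + 4 * Nn ^+ 3 / M ^+ 2 -
   ((Nn / M - Nn ^+ 2 / (2 * M) + e * Nn ^+ 2 / M + e ^+ 2 * Nn ^+ 2 / (2 * M))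
    + (- ((1 + e) / 2 * l - (1 + e) / 2 * l ^+ 2)) * Nn)
   = Nn ^+ 3 / M ^+ 2 * (4 - 2 * (1 + e) * e ^+ 2) by rewrite /l; field; rewrite gt_eqF.
apply: mulr_ge0; first by apply: divr_ge0; apply: exprn_ge0 => //; apply: ltW.
have e2 : e ^+ 2 <= 1 by rewrite expr2; nra.
have e20 : 0 <= e ^+ 2 by apply: exprn_ge0.
have : (1 + e) * e ^+ 2 <= 2 * 1 by apply: ler_pM => //; lra.
lra.
Qed.

Lemma G_up (e : R) h N : (0 < h)%N -> 0 <= e -> e <= 1 ->
  G ((1 + e) / (2 * h%:R)) ((1 - e) / (2 * h%:R)) N h h <=
  expR (N%:R / (2 * h%:R) - (1 + e ^+ 2) * N%:R ^+ 2 / (2 * (2 * h%:R))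
        + 4 * N%:R ^+ 3 / (2 * h%:R) ^+ 2).
Proof.
move=> h0 e0 e1; rewrite G_mix //.
have M0 : (0 : R) < 2 * h%:R by rewrite mulr_gt0 // ltr0n.
set M := 2 * h%:R; set Nn := N%:R; set p := (1 + e) / 2.
have p0 : 0 <= p by rewrite /p; lra.
have p1 : 0 <= 1 - p by rewrite /p; lra.
set l := 2 * e * Nn / M.
have l0 : 0 <= l by apply: divr_ge0; [apply: mulr_ge0 => //; apply: mulr_ge0; rewrite ?ler0n | apply: ltW].
set cst := Nn / M - Nn ^+ 2 / (2 * M) + e * Nn ^+ 2 / M + e ^+ 2 * Nn ^+ 2 / (2 * M).
have wge0 : forall k : 'I_N.+1, 0 <= (1 - p) ^+ (N - k) * p ^+ k *+ 'C(N, k).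
  by move=> k; apply: mulrn_wge0; apply: mulr_ge0; apply: exprn_ge0.
apply: le_trans (_ : _ <= \sum_(k < N.+1) (1 - p) ^+ (N - k) * p ^+ k *+ 'C(N, k)
                  * (expR cst * expR (- l) ^+ k)) _.
  apply: ler_sum => k _; apply: ler_wpM2l; first exact: wge0.
  apply: le_trans (ler_pM (Ff_ge0 R h k) (Ff_ge0 R h (N - k)) (Ff_up R k h0) (Ff_up R (N - k) h0)) _.
  rewrite -expRM_natr -!expRD ler_expR natrB; last by rewrite -ltnS.
  exact: quad_ineq.
under eq_bigr do rewrite mulrCA.
rewrite -mulr_sumr binom_gen.
have base : 1 - p + p * expR (- l) <= expR (- (p * l / (1 + l))).
  apply: le_trans (expR_ge1Dx _).
  have r1 : expR (- l) <= (1 + l)^-1.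
    rewrite expRN lef_pV2 ?posrE ?expR_gt0 //; last by lra.
    exact: expR_ge1Dx.
  apply: le_trans (_ : _ <= 1 - p + p * (1 + l)^-1) _; first by rewrite lerD2l ler_wpM2l.
  by rewrite le_eqVlt; apply/orP; left; apply/eqP; field; lra.
apply: le_trans (_ : _ <= expR cst * expR (- (p * l / (1 + l))) ^+ N) _.
  apply: ler_wpM2l; first exact: expR_ge0.
  apply: lerXn2r; rewrite ?nnegrE ?expR_ge0 //.
  by apply: addr_ge0 => //; apply: mulr_ge0 => //; apply: expR_ge0.
rewrite -expRM_natr -expRD ler_expR.
exact: final_up.
Qed.

Lemma predn_natr (k : nat) : (k%:R * (k.-1)%:R : R) = k%:R * (k%:R - 1).
Proof. by case: k => [|k]; rewrite ?mul0r //= -natr1 addrK. Qed.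

Lemma G_low (e : R) h N : (0 < h)%N -> (N.*2 <= h)%N -> 0 <= e -> e <= 1 ->
  expR (- ((1 + e ^+ 2) * N%:R ^+ 2 / (2 * (2 * h%:R)) + N%:R / (2 * h%:R)
        + 4 * N%:R ^+ 3 / (2 * h%:R) ^+ 2))
  <= G ((1 + e) / (2 * h%:R)) ((1 - e) / (2 * h%:R)) N h h.
Proof.
move=> h0 Nh e0 e1.
rewrite G_mix //.
have H0 : (0 : R) < h%:R by rewrite ltr0n.
set H := h%:R; set Nn := N%:R; set p := (1 + e) / 2.
have p0 : 0 <= p by rewrite /p; lra.
have p1 : 0 <= 1 - p by rewrite /p; lra.
set w := fun k : 'I_N.+1 => (1 - p) ^+ (N - k) * p ^+ k *+ 'C(N, k).
have wge0 : forall k, 0 <= w k.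
  by move=> k; apply: mulrn_wge0; apply: mulr_ge0; apply: exprn_ge0.
have w1 : \sum_k w k = 1.
  transitivity (\sum_(k < N.+1) (1 - p) ^+ (N - k) * p ^+ k *+ 'C(N, k) * 1 ^+ k).
    by apply: eq_bigr => k _; rewrite expr1n mulr1.
  by rewrite binom_gen mulr1 subrK expr1n.
set phi := fun k : 'I_N.+1 => (k%:R ^+ 2 + (Nn - k%:R) ^+ 2) / (2 * H) + Nn ^+ 3 / H ^+ 2.
apply: le_trans (_ : _ <= \sum_k w k * expR (- phi k)) _; last first.
  apply: ler_sum => k _; apply: ler_wpM2l; first exact: wge0.
  have kN : (k <= N)%N by rewrite -ltnS.
  have k2 : (k.*2 <= h)%N by apply: leq_trans Nh; rewrite leq_double.
  have k3 : ((N - k).*2 <= h)%N by apply: leq_trans Nh; rewrite leq_double leq_subr.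
  apply: le_trans (ler_pM (expR_ge0 _) (expR_ge0 _) (Ff_low R k2) (Ff_low R k3)).
  rewrite -expRD ler_expR natrB // -subr_ge0 /phi.
  have K0 : (0 : R) <= k%:R by rewrite ler0n.
  have KN : (k%:R : R) <= Nn by rewrite ler_nat.
  set K := k%:R.
  have -> : - (K ^+ 2 / (2 * H) + K ^+ 3 / H ^+ 2) +
     - ((Nn - K) ^+ 2 / (2 * H) + (Nn - K) ^+ 3 / H ^+ 2) -
     - ((K ^+ 2 + (Nn - K) ^+ 2) / (2 * H) + Nn ^+ 3 / H ^+ 2)
     = 3 * Nn * K * (Nn - K) / H ^+ 2 by field; rewrite gt_eqF.
  apply: divr_ge0; last by apply: exprn_ge0; apply: ltW.
  apply: mulr_ge0; last by lra.
  by apply: mulr_ge0 => //; apply: mulr_ge0; rewrite ?ler0n.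
apply: le_trans (@jensen_exp _ w phi wge0 w1); rewrite ler_expR lerN2.
have E : \sum_k w k * phi k =
   2 / (2 * H) * (\sum_k w k * (k%:R * (k.-1)%:R))
   + (2 - 2 * Nn) / (2 * H) * (\sum_k w k * k%:R)
   + (Nn ^+ 2 / (2 * H) + Nn ^+ 3 / H ^+ 2) * (\sum_k w k).
  rewrite !mulr_sumr -!big_split /=; apply: eq_bigr => k _.
  by rewrite predn_natr /phi; field; rewrite gt_eqF.
rewrite E w1 /w binom_mom2 binom_mom1 subrK !expr1n !mulr1.
have -> : Nn * (N.-1)%:R = Nn * (Nn - 1) by rewrite /Nn predn_natr.
rewrite -subr_ge0.
have -> : (1 + e ^+ 2) * Nn ^+ 2 / (2 * (2 * H)) + Nn / (2 * H) + 4 * Nn ^+ 3 / (2 * H) ^+ 2 -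
   (2 / (2 * H) * (Nn * (Nn - 1) * p ^+ 2) + (2 - 2 * Nn) / (2 * H) * (Nn * p) +
     (Nn ^+ 2 / (2 * H) + Nn ^+ 3 / H ^+ 2)) = Nn * (1 + e ^+ 2) / (4 * H)
   by rewrite /p; field; rewrite gt_eqF.
apply: divr_ge0; last by lra.
apply: mulr_ge0; first by rewrite ler0n.
by have := sqr_ge0 e; lra.
Qed.
End B.

Section C.
Variable R : realType.

Lemma W_qom (e : R) m (omega : {set 'I_m}) N :
  (0 < m)%N -> ~~ odd m -> #|omega| = (m %/ 2)%N ->
  W N (qom e omega) = G ((1 + e) / (2 * (m./2)%:R)) ((1 - e) / (2 * (m./2)%:R)) N m./2 m./2.
Proof.
move=> m0 me om.
have mh : m = (m./2).*2 by rewrite -[in LHS](odd_double_half m) (negbTE me) add0n.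
have cT : #|~: omega| = m./2.
  by rewrite cardsCs setCK card_ord om divn2; lia.
transitivity (G ((1 + e) / (2 * (m./2)%:R)) ((1 - e) / (2 * (m./2)%:R)) N #|omega| #|~: omega|);
  last by rewrite om cT divn2.
apply: W_G; first by move=> j; rewrite in_setC => ->.
move=> j; rewrite /qom in_setC; case: (j \in omega) => //=.
  by rewrite -natrM mul2n -mh.
by rewrite -natrM mul2n -mh.
Qed.

Lemma lnW_bounds (e : R) m (omega : {set 'I_m}) N :
  (0 < m)%N -> ~~ odd m -> #|omega| = (m %/ 2)%N -> (4 * N <= m)%N -> 0 <= e -> e <= 1 ->
  [/\ 0 < W N (qom e omega),
  - ((1 + e ^+ 2) / 2 * (N%:R ^+ 2 / m%:R)) - N%:R / m%:R - 4 * (N%:R ^+ 2 / m%:R * (N%:R / m%:R))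
    <= ln (W N (qom e omega)) &
  ln (W N (qom e omega)) <=
   N%:R / m%:R - (1 + e ^+ 2) / 2 * (N%:R ^+ 2 / m%:R) + 4 * (N%:R ^+ 2 / m%:R * (N%:R / m%:R))].
Proof.
move=> m0 me om Nm e0 e1.
have mh : m = (m./2).*2 by rewrite -[in LHS](odd_double_half m) (negbTE me) add0n.
have h0 : (0 < m./2)%N by lia.
have Nh : (N.*2 <= m./2)%N by lia.
have Mr : (m%:R : R) = 2 * (m./2)%:R by rewrite -natrM mul2n -mh.
rewrite W_qom //.
have Hlo := G_low h0 Nh e0 e1.
have Hup := G_up N h0 e0 e1.
have Gp : 0 < G ((1 + e) / (2 * (m./2)%:R)) ((1 - e) / (2 * (m./2)%:R)) N m./2 m./2.
  exact: lt_le_trans (expR_gt0 _) Hlo.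
have H0 : (0 : R) < (m./2)%:R by rewrite ltr0n.
split => //; rewrite Mr.
  apply: le_trans (_ : _ <= ln (expR (- ((1 + e ^+ 2) * N%:R ^+ 2 / (2 * (2 * (m./2)%:R)) + N%:R / (2 * (m./2)%:R)
        + 4 * N%:R ^+ 3 / (2 * (m./2)%:R) ^+ 2)))) _.
    by rewrite expRK le_eqVlt; apply/orP; left; apply/eqP; field; rewrite gt_eqF.
  by rewrite ler_ln ?posrE ?expR_gt0.
apply: le_trans (_ : _ <= ln (expR (N%:R / (2 * (m./2)%:R) - (1 + e ^+ 2) * N%:R ^+ 2 / (2 * (2 * (m./2)%:R))
        + 4 * N%:R ^+ 3 / (2 * (m./2)%:R) ^+ 2))) _.
  by rewrite ler_ln ?posrE ?expR_gt0.
by rewrite expRK le_eqVlt; apply/orP; left; apply/eqP; field; rewrite gt_eqF.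
Qed.
End C.

Theorem lemma2 (R : realType) (eps : R) (N n : nat -> nat) :
  0 < eps <= 1 ->
  (forall m : nat, ~~ odd m -> (0 < N m)%N /\ (0 < n m)%N) ->
  (forall eta : R, 0 < eta -> exists M : nat, forall m : nat,
      (M <= m)%N -> ~~ odd m -> (N m)%:R <= eta * m%:R) ->
  (forall eta : R, 0 < eta -> exists M : nat, forall m : nat,
      (M <= m)%N -> ~~ odd m -> (n m)%:R <= eta * m%:R) ->
  exists C : R, forall eta : R, 0 < eta -> exists M : nat, forall m : nat,
    (M <= m)%N -> ~~ odd m ->
    forall omega : {set 'I_m}, #|omega| = (m %/ 2)%N ->
    exists theta : R, `|theta| <= eta /\
      `| ln (probA eps omega (N m) (n m))
         + (1 + eps ^+ 2 / 2) * ((N m)%:R ^+ 2 / m%:R) * (1 + theta) | <= C.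
Proof.
move=> /andP[e0 e1] HN0 HN _.
exists 1 => eta eta0.
pose d := Num.min (eta / 8) (1 / 4).
have d0 : 0 < d by rewrite /d lt_min; apply/andP; split; lra.
have d1 : d <= eta / 8 by rewrite /d ge_min lexx.
have d2 : d <= 1 / 4 by rewrite /d ge_min lexx orbT.
have [M0 HM0] := HN d d0.
exists M0 => m Mm me omega om.
have Nle := HM0 m Mm me.
have [Np _] := HN0 m me.
move: Nle Np; set Nm := N m => Nle Np.
have Nr1 : (1 : R) <= Nm%:R by rewrite ler1n.
have m0 : (0 < m)%N.
  rewrite lt0n; apply/negP => /eqP m00; move: Nle; rewrite m00 mulr0 => Nle; lra.
have mr0 : (0 : R) < m%:R by rewrite ltr0n.
have N4 : (4 * Nm <= m)%N.
  rewrite -(ler_nat R) natrM.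
  have : d * m%:R <= 1 / 4 * m%:R by apply: ler_wpM2r => //; apply: ltW.
  lra.
have [W0p W0l W0u] := @lnW_bounds R 0 m omega Nm m0 me om N4 (lexx 0) ler01.
have [Wep Wel Weu] := @lnW_bounds R eps m omega Nm m0 me om N4 (ltW e0) e1.
have WU : W Nm (unifp R (m := m)) = W Nm (qom 0 omega).
  by apply: W_ext => j; rewrite /qom /unifp addr0 subr0; case: ifP.
rewrite probA_fact // WU lnM ?posrE //.
move: W0l W0u Wel Weu.
set X := ln (W Nm (qom 0 omega)); set Y := ln (W Nm (qom eps omega)).
set L := Nm%:R ^+ 2 / m%:R; set r := Nm%:R / m%:R.
have z2 : (0 : R) ^+ 2 = 0 by rewrite expr2 mulr0.
rewrite z2 => W0l W0u Wel Weu.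
have L0 : 0 < L by rewrite /L divr_gt0 // exprn_gt0 //; lra.
have r0 : 0 <= r by rewrite /r divr_ge0 // ltW.
have rd : r <= d by rewrite /r ler_pdivrMr.
have Lr : L * r <= L * (eta / 8) by apply: ler_wpM2l; [exact: ltW | exact: le_trans rd d1].
set c := 1 + eps ^+ 2 / 2.
have c1 : 1 <= c by rewrite /c; have := sqr_ge0 eps; lra.
have cL : 0 < c * L by apply: mulr_gt0 => //; lra.
have cLe : L * eta <= c * L * eta.
  have : 0 <= (c - 1) * (L * eta) by apply: mulr_ge0; [lra | apply: mulr_ge0; apply: ltW].
  by rewrite mulrBl mul1r mulrA subr_ge0.
set D := X + Y + c * L.
have hc : c * L = (1 + 0) / 2 * L + (1 + eps ^+ 2) / 2 * L by rewrite /c; field.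
have Dlo : - (1 / 2 + c * L * eta) <= D by rewrite /D; lra.
have Dhi : D <= 1 / 2 + c * L * eta by rewrite /D; lra.
have E : forall th, X + Y + c * L * (1 + th) = D + c * L * th by move=> th; rewrite /D; ring.
case: (lerP D (1 / 2)) => Dh; case: (lerP (- (1 / 2)) D) => Dl.
- exists 0; rewrite normr0 ltW //; split => //.
  by rewrite E mulr0 addr0 ler_norml; apply/andP; split; lra.
- exists (- (D + 1 / 2) / (c * L)); split.
    rewrite normrM normfV (gtr0_norm cL) ler_pdivrMr // ler_norml.
    by apply/andP; split; lra.
  rewrite E; have -> : c * L * (- (D + 1 / 2) / (c * L)) = - (D + 1 / 2) by field; (try apply/andP; split); rewrite gt_eqF //; lra.
  by rewrite ler_norml; apply/andP; split; lra.
- exists (- (D - 1 / 2) / (c * L)); split.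
    rewrite normrM normfV (gtr0_norm cL) ler_pdivrMr // ler_norml.
    by apply/andP; split; lra.
  rewrite E; have -> : c * L * (- (D - 1 / 2) / (c * L)) = - (D - 1 / 2) by field; (try apply/andP; split); rewrite gt_eqF //; lra.
  by rewrite ler_norml; apply/andP; split; lra.
- exfalso; lra.
Qed.
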